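(* Let $S=(X,\cdot)$ be a semigroup and $\Phi$ a tight twisting of $S$, and let $T_\Phi^0$ be the associated $0$-twisted semigroup. Then for all $a,b\in X$ and all $\xi\in\{\mathcal{R},\mathcal{L},\mathcal{D},\mathcal{J},\mathcal{H},\leq_{\mathcal{R}},\leq_{\mathcal{L}},\leq_{\mathcal{J}}\}$ we have $a\mathrel{\xi^{T_\Phi^0}}b \iff a\mathrel{\xi^{S}}b$.
   Context: Green's relations and the preorders $\leq_{\mathcal{R}},\leq_{\mathcal{L}},\leq_{\mathcal{J}}$ are the standard ones (defined using the semigroup with an identity adjoined); a superscript indicates the semigroup in which they are computed. $\mathbb{N}=\{0,1,2,\dots\}$. A twisting of a semigroup $S$ is a map $\Phi:S\times S\to\mathbb{N}$ with $\Phi(a,b)+\Phi(ab,c)=\Phi(a,bc)+\Phi(b,c)$ for all $a,b,c\in S$. It is tight if (1) for all $a,b\in S$ there is $a'\in S$ with $ab=a'b$ and $\Phi(a',b)=0$, and (2) for all $a,b\in S$ there is $b'\in S$ with $ab=ab'$ and $\Phi(a,b')=0$. For $S=(X,\cdot)$ with twisting $\Phi$, the $0$-twisted semigroup is $T_\Phi^0=(X\sqcup\{0\},* )$ where $a*b=ab$ if $a,b\neq0$ and $\Phi(a,b)=0$, and $a*b=0$ otherwise. *)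

(* Defs.v *)
From Stdlib Require Import Arith.

(* Green's preorders and relations of a magma (M, op), computed in M^1
   (identity adjoined): s ∈ M^1 is modelled by "s absent" or "s ∈ M". *)
Section Green.
Variables (M : Type) (op : M -> M -> M).

Definition leR (a b : M) : Prop := a = b \/ exists s, a = op b s.
Definition leL (a b : M) : Prop := a = b \/ exists s, a = op s b.
Definition leJ (a b : M) : Prop :=
  a = b \/ (exists s, a = op s b) \/ (exists t, a = op b t)
        \/ (exists s t, a = op (op s b) t).
Definition greenR (a b : M) : Prop := leR a b /\ leR b a.
Definition greenL (a b : M) : Prop := leL a b /\ leL b a.
Definition greenJ (a b : M) : Prop := leJ a b /\ leJ b a.
Definition greenH (a b : M) : Prop := greenR a b /\ greenL a b.
Definition greenD (a b : M) : Prop := exists c, greenR a c /\ greenL c b.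
End Green.

Inductive green_kind := gR | gL | gD | gJ | gH | gleR | gleL | gleJ.

Definition green_rel (k : green_kind) (M : Type) (op : M -> M -> M)
  : M -> M -> Prop :=
  match k with
  | gR => @greenR M op | gL => @greenL M op | gD => @greenD M op
  | gJ => @greenJ M op | gH => @greenH M op
  | gleR => @leR M op | gleL => @leL M op | gleJ => @leJ M op
  end.

Definition associative_op {X : Type} (mul : X -> X -> X) : Prop :=
  forall a b c, mul (mul a b) c = mul a (mul b c).

Definition is_twisting {X : Type} (mul : X -> X -> X) (Phi : X -> X -> nat)
  : Prop :=
  forall a b c, Phi a b + Phi (mul a b) c = Phi a (mul b c) + Phi b c.

Definition is_tight {X : Type} (mul : X -> X -> X) (Phi : X -> X -> nat)
  : Prop :=
  (forall a b, exists a', mul a b = mul a' b /\ Phi a' b = 0) /\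
  (forall a b, exists b', mul a b = mul a b' /\ Phi a b' = 0).

(* The 0-twisted semigroup T^0_Phi on X ⊔ {0}; None plays the role of 0. *)
Definition twisted0_mul {X : Type} (mul : X -> X -> X) (Phi : X -> X -> nat)
  (x y : option X) : option X :=
  match x, y with
  | Some a, Some b => if Nat.eqb (Phi a b) 0 then Some (mul a b) else None
  | _, _ => None
  end.

(* Main.v *)
Require Import Defs.
From Stdlib Require Import Arith.

Section Pf.
Variables (X : Type) (mul : X -> X -> X) (Phi : X -> X -> nat).
Hypothesis Htight : is_tight mul Phi.
Local Notation TM := (twisted0_mul mul Phi).

Lemma tm_some x y z : TM x y = Some z ->
  exists a b, x = Some a /\ y = Some b /\ Phi a b = 0 /\ z = mul a b.
Proof.
  destruct x as [a|], y as [b|]; simpl; try discriminate.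
  destruct (Nat.eqb_spec (Phi a b) 0); intro H; try discriminate.
  injection H; intros; subst; eauto 7.
Qed.

Lemma tm_zero a b : Phi a b = 0 -> TM (Some a) (Some b) = Some (mul a b).
Proof. intro H; simpl; rewrite H; reflexivity. Qed.

Lemma leR_eq a b : leR (option X) TM (Some a) (Some b) <-> leR X mul a b.
Proof.
  split.
  - intros [H|[s H]]. left; congruence.
    symmetry in H; destruct (tm_some _ _ _ H) as (x&y&E1&E2&E3&E4).
    injection E1; intros; subst. right; eauto.
  - intros [H|[s H]]. left; congruence.
    destruct (proj2 Htight b s) as (s'&E&P). right; exists (Some s').
    rewrite tm_zero by exact P. congruence.
Qed.

Lemma leL_eq a b : leL (option X) TM (Some a) (Some b) <-> leL X mul a b.
Proof.
  split.
  - intros [H|[s H]]. left; congruence.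
    symmetry in H; destruct (tm_some _ _ _ H) as (x&y&E1&E2&E3&E4).
    injection E2; intros; subst. right; eauto.
  - intros [H|[s H]]. left; congruence.
    destruct (proj1 Htight s b) as (s'&E&P). right; exists (Some s').
    rewrite tm_zero by exact P. congruence.
Qed.

Lemma leJ_eq a b : leJ (option X) TM (Some a) (Some b) <-> leJ X mul a b.
Proof.
  split.
  - intros [H|[[s H]|[[t H]|[s [t H]]]]].
    + left; congruence.
    + symmetry in H; destruct (tm_some _ _ _ H) as (x&y&E1&E2&E3&E4).
      injection E2; intros; subst. right; left; eauto.
    + symmetry in H; destruct (tm_some _ _ _ H) as (x&y&E1&E2&E3&E4).
      injection E1; intros; subst. right; right; left; eauto.
    + symmetry in H; destruct (tm_some _ _ _ H) as (x&y&E1&E2&E3&E4).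
      destruct (tm_some _ _ _ E1) as (x'&y'&F1&F2&F3&F4).
      injection F2; intros; subst. right; right; right; eauto.
  - intros [H|[[s H]|[[t H]|[s [t H]]]]].
    + left; congruence.
    + destruct (proj1 Htight s b) as (s'&E&P). right; left; exists (Some s').
      rewrite tm_zero by exact P. congruence.
    + destruct (proj2 Htight b t) as (t'&E&P). right; right; left; exists (Some t').
      rewrite tm_zero by exact P. congruence.
    + destruct (proj2 Htight (mul s b) t) as (t'&E&P).
      destruct (proj1 Htight s b) as (s'&E'&P').
      right; right; right; exists (Some s'), (Some t').
      rewrite tm_zero by exact P'. rewrite <- E'. rewrite tm_zero by exact P.
      congruence.
Qed.

Lemma leR_none a : ~ leR (option X) TM (Some a) None.
Proof. intros [H|[s H]]; [discriminate|destruct s; discriminate]. Qed.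

End Pf.

Theorem mainTheorem2 (X : Type) (mul : X -> X -> X) (Phi : X -> X -> nat)
  (Hassoc : associative_op mul) (Htw : is_twisting mul Phi)
  (Htight : is_tight mul Phi) :
  forall (a b : X) (xi : green_kind),
    @green_rel xi (option X) (twisted0_mul mul Phi) (Some a) (Some b) <->
    @green_rel xi X mul a b.
Proof.
  intros a b xi.
  pose proof (leR_eq X mul Phi Htight) as R.
  pose proof (leL_eq X mul Phi Htight) as L.
  pose proof (leJ_eq X mul Phi Htight) as J.
  destruct xi; simpl; unfold greenR, greenL, greenJ, greenH, greenD;
    try rewrite !R; try rewrite !L; try rewrite !J; try tauto.
  split.
  - intros [[c|] [[H1 H2] H3]].
    + exists c. apply R in H1. destruct H3 as [H3 H4]. apply L in H3, H4.
      apply R in H2. unfold greenR, greenL. tauto.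
    + exfalso; exact (leR_none X mul Phi a H1).
  - intros [c [[H1 H2] [H3 H4]]]. exists (Some c).
    apply R in H1, H2. apply L in H3, H4. unfold greenR, greenL. tauto.
  - unfold greenR, greenL. rewrite !R, !L. tauto.
Qed.
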